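(* Let $K$ be an admissible kernel on $X\times Y$ and let $C_K\in\mathbb{R}$ be its constant, i.e. $\int_X K(x,y)\,dm_X(x)=C_K$ for all $y\in Y$. Let $\mu$ be a Borel probability measure on $Y$ and $c\in\mathbb{R}$, and suppose that $U_K^\mu(x)=c$ for all $x\in X$. Then $c=C_K$.
   Context: $(X,d_X)$ and $(Y,d_Y)$ are compact metric spaces and $G$ is a compact topological group acting isometrically and transitively on both $X$ and $Y$. $m_X$ and $m_Y$ denote the unique $G$-invariant Radon (Borel) probability measures on $X$ and $Y$. A Borel measurable $K:X\times Y\to\mathbb{R}\cup\{-\infty\}$ is an admissible kernel if: (i) there is $B_K\in[0,\infty)$ with $-\infty\le K(x,y)\le B_K$ for all $x,y$; (ii) $\int_X|K(x,y)|\,dm_X(x)<\infty$ for every $y\in Y$; (iii) for every $y$, $K(\cdot,y)$ is upper semi-continuous; (iv) $K(g(x),y)=K(x,g^{-1}(y))$ for all $g\in G,x\in X,y\in Y$. For an admissible kernel the integral $\int_X K(x,y)\,dm_X(x)$ is independent of $y$; this common value is the constant $C_K$. For a Borel probability measure $\mu$ on $Y$, the potential function is $U_K^\mu(x)=\int_Y K(x,y)\,d\mu(y)$, $x\in X$. *)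

(* Defs.v *)
From HB Require Import structures.
From mathcomp Require Import all_boot all_order all_algebra.
From mathcomp Require Import all_classical all_reals all_analysis.
From mathcomp Require Import measurable_realfun.

Set Implicit Arguments.
Unset Strict Implicit.
Unset Printing Implicit Defensive.

Import Order.TTheory GRing.Theory Num.Theory.
Import numFieldNormedType.Exports.

Local Open Scope classical_set_scope.
Local Open Scope ring_scope.

(* Metric spaces with a distinguished point (MathComp-Analysis measurable
   spaces must be pointed; this is harmless here since X and Y carry
   probability measures and are therefore nonempty). *)
#[short(type="pmetricType")]
HB.structure Definition PointedMetric (K : numDomainType) :=
  { M of Pointed M & Metric K M }.

HB.instance Definition _ (X Y : ptopologicalType) := Pointed.on (X * Y)%type.

Notation borel T := (g_sigma_algebraType (@open T)).

Definition is_group (G : Type) (mul : G -> G -> G) (inv : G -> G) (one : G) :=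
  [/\ forall a b c, mul a (mul b c) = mul (mul a b) c,
      forall a, mul one a = a,
      forall a, mul a one = a,
      forall a, mul (inv a) a = one
    & forall a, mul a (inv a) = one].

Definition compact_topological_group (G : topologicalType)
    (mul : G -> G -> G) (inv : G -> G) (one : G) :=
  [/\ is_group mul inv one,
      continuous (fun p : G * G => mul p.1 p.2),
      continuous inv
    & compact [set: G]].

Definition group_action (G X : topologicalType) (mul : G -> G -> G) (one : G)
    (act : G -> X -> X) :=
  [/\ forall x, act one x = x,
      forall g h x, act (mul g h) x = act g (act h x)
    & continuous (fun p : G * X => act p.1 p.2)].

Definition isometric_transitive {R : realType} (G : Type) (X : metricType R)
    (act : G -> X -> X) :=
  (forall g x x', mdist (act g x) (act g x') = mdist x x') /\
  (forall x x', exists g, act g x = x').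

(* Radon property of a finite Borel measure on a Hausdorff space X: inner
   regular by compact sets and outer regular by open sets on Borel sets
   (local finiteness is automatic for a finite measure). *)
Definition radon {R : realType} (X : ptopologicalType)
    (m : set (borel X) -> \bar R) :=
  forall A : set (borel X), measurable A ->
    m A = ereal_sup [set m C | C in [set C : set X | compact C /\ C `<=` A]]
 /\ m A = ereal_inf [set m U | U in [set U : set X | open U /\ A `<=` U]].

Definition invariant_measure {R : realType} (G : Type) (X : ptopologicalType)
    (act : G -> X -> X) (m : set (borel X) -> \bar R) :=
  forall g (A : set (borel X)), measurable A -> m (act g @^-1` A) = m A.

Definition usc (X : topologicalType) {R : realType} (f : X -> \bar R) :=
  forall a : R, open [set x | (f x < a%:E)%E].

Definition admissible_kernel {R : realType} (G : Type) (inv : G -> G)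
    (X Y : pmetricType R) (actX : G -> X -> X) (actY : G -> Y -> Y)
    (mX : set (borel X) -> \bar R) (K : X -> Y -> \bar R) :=
  [/\
      measurable_fun [set: borel (X * Y)%type]
        (fun p : borel (X * Y)%type => K p.1 p.2),
      (exists2 B : R, 0 <= B & forall x y, (K x y <= B%:E)%E),
      (forall y, (\int[mX]_x `|K x y| < +oo)%E),
      (forall y, usc (fun x : X => K x y))
    &
      (forall g x y, K (actX g x) y = K x (actY (inv g) y))].

(* Main.v *)
Require Import Defs.
From HB Require Import structures.
From mathcomp Require Import all_boot all_order all_algebra.
From mathcomp Require Import all_classical all_reals all_analysis.
From mathcomp Require Import measurable_realfun.
From mathcomp Require Import lra.
Import Order.TTheory GRing.Theory Num.Theory.
Import numFieldNormedType.Exports.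
Local Open Scope classical_set_scope.
Local Open Scope ring_scope.

Section Helpers.
Variable R : realType.

Lemma metric_ball_open (M : metricType R) (a : M) (r : R) : open (ball a r).
Proof.
rewrite openE => u Bu; apply/nbhs_ballP.
have du : mdist a u < r by move: Bu; rewrite ballEmdist.
exists ((r - mdist a u) / 2); first by apply: divr_gt0 => //; rewrite subr_gt0.
move=> v Bv.
have H1 : ball a ((mdist a u + r) / 2) u.
  by rewrite ballEmdist /= ltr_pdivlMr // mulr2n mulrDr mulr1 ltrD2l.
have := ball_triangle H1 Bv.
have -> : (mdist a u + r) / 2 + (r - mdist a u) / 2 = r.
  by lra.
by [].
Qed.

Lemma compact_finite_cover (M : pmetricType R) : compact [set: M] ->
  forall e : R, 0 < e -> exists s : seq M, forall x, exists2 a, a \in s & ball a e x.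
Proof.
move=> cM e e0.
move: cM; rewrite compact_cover => /(_ M setT (fun a => ball a e)).
case.
- by move=> i _; exact: metric_ball_open.
- by move=> x _; exists x => //; exact: ballxx.
move=> D' _ HD; exists (finmap.enum_fset D') => x.
have [a aD Ba] := HD x I.
by exists a.
Qed.
End Helpers.
Section H2.
Variable R : realType.
Lemma ball_meas (M : pmetricType R) (a : M) (r : R) :
  measurable (ball a r : set (borel M)).
Proof. by apply: sub_sigma_algebra; exact: metric_ball_open. Qed.

Lemma open_prod_meas (X Y : pmetricType R) : compact [set: X] -> compact [set: Y] ->
  forall U : set (X * Y)%type, open U -> measurable (U : set (borel X * borel Y)%type).
Proof.
move=> cX cY U oU.
pose r (n : nat) : R := n.+1%:R^-1.
have r0 n : 0 < r n by rewrite /r invr_gt0.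
have cs (n : nat) := @compact_finite_cover R X cX _ (r0 n).
have ct (n : nat) := @compact_finite_cover R Y cY _ (r0 n).
pose s n := projT1 (cid (cs n)).
pose t n := projT1 (cid (ct n)).
have sP n x : exists2 a, a \in s n & ball a (r n) x := projT2 (cid (cs n)) x.
have tP n y : exists2 b, b \in t n & ball b (r n) y := projT2 (cid (ct n)) y.
pose rect n i j : set (X * Y)%type :=
  ball (nth point (s n) i) (r n) `*` ball (nth point (t n) j) (r n).
pose F n i j := if pselect (rect n i j `<=` U) then rect n i j else set0.
have -> : U = \bigcup_n \bigcup_i \bigcup_j F n i j.
  apply/seteqP; split; last first.
    move=> p [n _ [i _ [j _]]]; rewrite /F; case: pselect => // H.
    exact: H.
  case=> x y Uxy.
  have := oU _ Uxy; rewrite /= => /nbhs_ballP [e e0 He].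
  have [N _ HN] := near_infty_natSinv_lt (PosNum (divr_gt0 e0 (ltr0n R 2))).
  have rN : r N < e / 2 by exact: (HN N (leqnn N)).
  have [a aS Ba] := sP N x.
  have [b bT Bb] := tP N y.
  exists N => //; exists (index a (s N)) => //; exists (index b (t N)) => //.
  have sub : rect N (index a (s N)) (index b (t N)) `<=` U.
    rewrite /rect (nth_index point aS) (nth_index point bT).
    case=> u v [/= Bu Bv]; apply: He; split => /=.
      apply: (@le_ball _ _ _ (r N + r N)); first by lra.
      exact: ball_triangle (ball_sym Ba) Bu.
    apply: (@le_ball _ _ _ (r N + r N)); first by lra.
    exact: ball_triangle (ball_sym Bb) Bv.
  rewrite /F; destruct (pselect (rect N (index a (s N)) (index b (t N)) `<=` U)) as [hs|nsub]; last by exfalso; exact: nsub sub.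
  by simpl; rewrite /rect (nth_index point aS) (nth_index point bT); split.
apply: bigcupT_measurable => n; apply: bigcupT_measurable => i.
apply: bigcupT_measurable => j; rewrite /F; destruct (pselect (rect n i j `<=` U)); last exact: measurable0.
by apply: measurableX; exact: ball_meas.
Qed.
End H2.
Section H3.
Variable R : realType.
Lemma meas_transfer (X Y : pmetricType R) (f : (X * Y)%type -> \bar R) :
  compact [set: X] -> compact [set: Y] ->
  measurable_fun [set: borel (X * Y)%type] (f : borel (X * Y)%type -> \bar R) ->
  measurable_fun [set: (borel X * borel Y)%type] (f : (borel X * borel Y)%type -> \bar R).
Proof.
move=> cX cY mf _ A mA.
have := mf measurableT A mA.
apply: smallest_sub; first exact: sigma_algebra_measurable.
exact: open_prod_meas.
Qed.

Local Open Scope ereal_scope.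
Lemma int_B d (T : measurableType d) (P : probability T R) (f : T -> \bar R) (B r : R) :
  (0 <= B)%R -> measurable_fun setT f -> (forall x, f x <= B%:E) ->
  \int[P]_x f x = r%:E -> \int[P]_x (B%:E - f x) = (B - r)%:E.
Proof.
move=> B0 mf fB fr.
have hp : \int[P]_x f^\+ x <= B%:E.
  apply: (@le_trans _ _ (\int[P]_x (cst B%:E) x)).
    apply: ge0_le_integral => //.
    - exact: measurable_funepos.
    - move=> x _ /=; rewrite funeposE.
      by rewrite ge_max fB lee_fin B0.
  rewrite integral_cst // (_ : (P : {measure set T -> \bar R}) setT = 1) ?mule1 //; exact: probability_setT.
have hp0 : 0 <= \int[P]_x f^\+ x by apply: integral_ge0.
have hn : \int[P]_x f^\- x < +oo.
  rewrite ltey; apply/negP => /eqP hinf; move: fr; rewrite integralE hinf.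
  by move: hp hp0; case: (\int[P]_x f^\+ x).
have fint : P.-integrable setT f.
  apply/integrableP; split => //.
  rewrite -[fun x => _]/(abse \o f) fune_abse ge0_integralD //.
  - rewrite lte_add_pinfty //; exact: (le_lt_trans hp (ltry _)).
  - exact: measurable_funepos.
  - exact: measurable_funeneg.
rewrite (_ : (fun x => B%:E - f x) = (EFin \o cst B) \- f); last by [].
rewrite integralB //; last exact: finite_measure_integrable_cst.
have cB : \int[P]_x (EFin \o cst B) x = B%:E.
  rewrite (_ : EFin \o cst B = cst B%:E) // integral_cst //.
  by rewrite (_ : (P : {measure set T -> \bar R}) setT = 1) ?mule1 //; exact: probability_setT.
by rewrite fr cB.
Qed.
End H3.

Theorem lemma4p4 (R : realType) (X Y : pmetricType R) (G : topologicalType)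
    (mul : G -> G -> G) (inv : G -> G) (one : G)
    (actX : G -> X -> X) (actY : G -> Y -> Y)
    (mX : probability (borel X) R) (mY : probability (borel Y) R)
    (K : X -> Y -> \bar R) (C_K : R)
    (mu : probability (borel Y) R) (c : R) :
  compact [set: X] -> compact [set: Y] ->
  compact_topological_group mul inv one ->
  group_action mul one actX -> group_action mul one actY ->
  isometric_transitive actX -> isometric_transitive actY ->
  radon mX -> invariant_measure actX mX ->
  radon mY -> invariant_measure actY mY ->
  admissible_kernel inv actX actY mX K ->
  (forall y : Y, (\int[mX]_x K x y)%E = C_K%:E) ->
  (forall x : X, (\int[mu]_y K x y)%E = c%:E) ->
  c = C_K.
Proof.
move=> cX cY _ _ _ _ _ _ _ _ _ [mK [B B0 KB] _ _ _] HCK Hc.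
have mK2 : measurable_fun [set: (borel X * borel Y)%type]
    (fun p : (borel X * borel Y)%type => K p.1 p.2).
  exact: (@meas_transfer R X Y (fun p => K p.1 p.2) cX cY mK).
pose f := fun p : (borel X * borel Y)%type => (B%:E - K p.1 p.2)%E.
have mf : measurable_fun [set: (borel X * borel Y)%type] f.
  by apply: emeasurable_funB => //; exact: measurable_cst.
have f0 : forall p, (0 <= f p)%E.
  move=> p; rewrite /f; move: (KB p.1 p.2).
  case: (K p.1 p.2) => [k||] //=.
  - by rewrite -EFinD !lee_fin subr_ge0.
  - by move=> _; rewrite addey // leey.
have := @fubini_tonelli _ _ _ _ _ mX mu f mf f0.
have E1 : forall x : borel X, (\int[mu]_y f (x, y) = (B - c)%:E)%E.
  move=> x; apply: int_B => //.
  all: try first [exact: (measurable_fun_pair2 x mK2) | by move=> y; exact: KB].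
  all: try exact: (Hc x).
have E2 : forall y : borel Y, (\int[mX]_x f (x, y) = (B - C_K)%:E)%E.
  move=> y; apply: int_B => //.
  all: try first [exact: (measurable_fun_pair1 y mK2) | by move=> x; exact: KB].
  all: try exact: (HCK y).
rewrite (eq_integral (fun _ => (B - c)%:E)); last by move=> x _; exact: E1.
rewrite [in X in _ = X](eq_integral (fun _ => (B - C_K)%:E)); last by move=> y _; exact: E2.
rewrite !integral_cst //.
rewrite (_ : (mX : {measure set (borel X) -> \bar R}) setT = 1%E); last exact: probability_setT.
rewrite (_ : (mu : {measure set (borel Y) -> \bar R}) setT = 1%E); last exact: probability_setT.
rewrite !mule1 => -[H].
lra.
Qed.
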